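(* Suppose $c_1\ge-1$, $c_2\ge-1$ and $c_3=\bar c_3(c_1,c_2)$. Then $U^*(x):=(1+\sqrt{1+c_1})(1-x)+(-1-\sqrt{1+c_2})(1+x)$ is the unique $C^1$ solution of $(1-x^2)U'+2xU+\frac12U^2=P_c(x)$ in $(-1,1)$. In particular $U^*(-1)=\tau_2(c_1)$ and $U^*(1)=\tau_1'(c_2)$.
   Context: $P_c(x):=c_1(1-x)+c_2(1+x)+c_3(1-x^2)$ for $c=(c_1,c_2,c_3)$. $\bar c_3(c_1,c_2):=-\frac12(\sqrt{1+c_1}+\sqrt{1+c_2})(\sqrt{1+c_1}+\sqrt{1+c_2}+2)$. $\tau_2(c_1):=2+2\sqrt{1+c_1}$, $\tau_1'(c_2):=-2-2\sqrt{1+c_2}$. *)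

(* Defs.v *)
From Stdlib Require Import Reals.
From Coquelicot Require Import Coquelicot.
Open Scope R_scope.

Definition P (c1 c2 c3 x : R) : R :=
  c1 * (1 - x) + c2 * (1 + x) + c3 * (1 - x ^ 2).

Definition c3bar (c1 c2 : R) : R :=
  - / 2 * (sqrt (1 + c1) + sqrt (1 + c2)) * (sqrt (1 + c1) + sqrt (1 + c2) + 2).

Definition tau2 (c1 : R) : R := 2 + 2 * sqrt (1 + c1).
Definition tau1' (c2 : R) : R := -2 - 2 * sqrt (1 + c2).

Definition Ustar (c1 c2 : R) (x : R) : R :=
  (1 + sqrt (1 + c1)) * (1 - x) + (-1 - sqrt (1 + c2)) * (1 + x).

Definition C1_on_open (a b : R) (f : R -> R) : Prop :=
  forall x, a < x < b -> ex_derive f x /\ continuous (Derive f) x.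

Definition solves_ODE (c1 c2 c3 : R) (U : R -> R) : Prop :=
  forall x, -1 < x < 1 ->
    (1 - x ^ 2) * Derive U x + 2 * x * U x + / 2 * (U x) ^ 2 = P c1 c2 c3 x.

(* Main.v *)
Require Import Defs.
From Stdlib Require Import Reals Lra Psatz.
From Coquelicot Require Import Coquelicot.
Open Scope R_scope.

Lemma mono (f df : R -> R) u v : u <= v ->
  (forall x, u <= x <= v -> is_derive f x (df x) /\ 0 <= df x) -> f u <= f v.
Proof.
  intros Huv H.
  destruct (MVT_gen f u v df) as [c [Hc Heq]].
  - intros x Hx. rewrite Rmin_left in Hx by lra. rewrite Rmax_right in Hx by lra.
    apply H; lra.
  - intros x Hx. rewrite Rmin_left in Hx by lra. rewrite Rmax_right in Hx by lra.
    apply continuity_pt_filterlim. apply (ex_derive_continuous (V:=R_NormedModule) f).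
    eexists. apply H; lra.
  - rewrite Rmin_left in Hc by lra. rewrite Rmax_right in Hc by lra.
    destruct (H c Hc) as [_ Hd].
    assert (0 <= df c * (v - u)) by (apply Rmult_le_pos; lra). lra.
Qed.

Lemma key (y r : R -> R) C : 0 < C ->
  (forall x, -1 < x < 1 -> is_derive y x (- (r x * y x ^ 2))) ->
  (forall x, -1 < x < 1 -> 0 <= r x) ->
  (forall x, -1 < x <= 0 -> C / (1 + x) <= r x) ->
  forall x0, -1 < x0 < 1 -> y x0 <= 0.
Proof.
  intros HC Hd Hr HrC x0 Hx0.
  apply Rnot_lt_le; intro Hp.
  assert (ydec : forall u v, -1 < u -> u <= v -> v < 1 -> y v <= y u).
  { intros u v Hu Huv Hv.
    assert (- y u <= - y v); [|lra].
    apply (mono (fun t => - y t) (fun t => r t * y t ^ 2)); auto.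
    intros x Hx; split.
    - assert (Hdx := Hd x ltac:(lra)). auto_derive.
      + eexists; exact Hdx.
      + assert (E: Derive (fun t => y t) x = -(r x * y x^2)) by (apply is_derive_unique; exact Hdx). rewrite E. ring.
    - apply Rmult_le_pos. apply Hr; lra. apply pow2_ge_0. }
  set (x1 := Rmin x0 0).
  assert (Hx1 : -1 < x1 <= 0 /\ x1 <= x0).
  { unfold x1; unfold Rmin; destruct Rle_dec; lra. }
  assert (Hy1 : y x0 <= y x1) by (apply ydec; lra).
  assert (Hpos : forall x, -1 < x <= x1 -> 0 < y x).
  { intros x Hx. assert (y x1 <= y x) by (apply ydec; lra). lra. }
  set (x := exp (ln (1 + x1) - / y x1 / C - 1) - 1).
  assert (Hxa : -1 < x) by (unfold x; pose proof (exp_pos (ln (1 + x1) - / y x1 / C - 1)); lra).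
  assert (Hxb : x <= x1).
  { unfold x. assert (exp (ln (1 + x1) - / y x1 / C - 1) <= exp (ln (1 + x1))).
    { apply Rlt_le, exp_increasing.
      assert (0 < / y x1 / C). { apply Rdiv_lt_0_compat; auto. apply Rinv_0_lt_compat; lra. }
      lra. }
    rewrite exp_ln in H by lra. lra. }
  assert (Hm : / y x - C * ln (1 + x) <= / y x1 - C * ln (1 + x1)).
  { apply (mono (fun t => / y t - C * ln (1 + t)) (fun t => r t - C / (1 + t))); auto.
    intros t Ht. split.
    - assert (Hyt := Hpos t ltac:(lra)).
      assert (Hdt := Hd t ltac:(lra)).
      auto_derive.
      + repeat split; try lra. eexists; exact Hdt.
      + assert (E: Derive (fun t => y t) t = -(r t * y t^2)) by (apply is_derive_unique; exact Hdt). rewrite E. field. lra.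
    - assert (C / (1 + t) <= r t) by (apply HrC; lra). lra. }
  assert (Hlx : ln (1 + x) = ln (1 + x1) - / y x1 / C - 1).
  { unfold x. replace (1 + (exp (ln (1 + x1) - / y x1 / C - 1) - 1)) with
      (exp (ln (1 + x1) - / y x1 / C - 1)) by ring. apply ln_exp. }
  rewrite Hlx in Hm.
  assert (Hyx := Hpos x ltac:(lra)).
  assert (0 < / y x) by (apply Rinv_0_lt_compat; lra).
  assert (C * (ln (1 + x1) - / y x1 / C - 1) = C * ln (1 + x1) - / y x1 - C) by (field; lra).
  lra.
Qed.

Lemma exp_mono_le x y : x <= y -> exp x <= exp y.
Proof. intros H. destruct (Rle_lt_or_eq_dec _ _ H) as [H1|H1].
  - apply Rlt_le, exp_increasing; auto.
  - subst; lra. Qed.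

Lemma key2 (y r : R -> R) C : 0 < C ->
  (forall x, -1 < x < 1 -> is_derive y x (- (r x * y x ^ 2))) ->
  (forall x, -1 < x < 1 -> 0 <= r x) ->
  (forall x, 0 <= x < 1 -> C / (1 - x) <= r x) ->
  forall x0, -1 < x0 < 1 -> 0 <= y x0.
Proof.
  intros HC Hd Hr HrC x0 Hx0.
  assert (- y (- - x0) <= 0); [|rewrite Ropp_involutive in H; lra].
  apply (key (fun t => - y (- t)) (fun t => r (- t)) C HC); try lra.
  - intros t Ht. assert (Hdt := Hd (- t) ltac:(lra)). auto_derive.
    + eexists; exact Hdt.
    + assert (E: Derive (fun u => y u) (- t) = -(r (- t) * y (- t)^2))
        by (apply is_derive_unique; exact Hdt). rewrite E. ring.
  - intros t Ht. apply Hr; lra.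
  - intros t Ht. replace (1 + t) with (1 - - t) by ring. apply HrC; lra.
Qed.

Theorem lemma2p5 (c1 c2 c3 : R) (hc1 : -1 <= c1) (hc2 : -1 <= c2)
  (hc3 : c3 = c3bar c1 c2) :
  (C1_on_open (-1) 1 (Ustar c1 c2) /\ solves_ODE c1 c2 c3 (Ustar c1 c2)) /\
  (forall U : R -> R, C1_on_open (-1) 1 U -> solves_ODE c1 c2 c3 U ->
     forall x, -1 < x < 1 -> U x = Ustar c1 c2 x) /\
  Ustar c1 c2 (-1) = tau2 c1 /\ Ustar c1 c2 1 = tau1' c2.
Proof.
  assert (HDs : forall x, Derive (Ustar c1 c2) x = - (2 + sqrt (1 + c1) + sqrt (1 + c2))).
  { intros x. apply is_derive_unique. unfold Ustar. auto_derive; auto. ring. }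
  assert (Ha2 := sqrt_sqrt (1 + c1) ltac:(lra)).
  assert (Hb2 := sqrt_sqrt (1 + c2) ltac:(lra)).
  assert (Ha0 := sqrt_pos (1 + c1)).
  assert (Hb0 := sqrt_pos (1 + c2)).
  unfold solves_ODE, C1_on_open, tau2, tau1'.
  rewrite hc3. unfold c3bar, P.
  set (a := sqrt (1 + c1)) in *. set (b := sqrt (1 + c2)) in *.
  unfold Ustar. fold a b.
  assert (HD : forall x, Derive (fun x => (1+a)*(1-x) + (-1-b)*(1+x)) x = -(2+a+b))
    by (intro; apply is_derive_unique; auto_derive; auto; ring).
  split; [split|split].
  - intros x Hx. split.
    + eexists. auto_derive; auto.
    + apply (continuous_ext (fun _ => - (2 + a + b))).
      * intros t. symmetry. apply HD.
      * apply continuous_const.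
  - intros x Hx. rewrite HD.
    clearbody a b. assert (c1 = a * a - 1) by lra. assert (c2 = b * b - 1) by lra.
    subst c1 c2. field.
  - clearbody a b. assert (c1 = a * a - 1) by lra. assert (c2 = b * b - 1) by lra.
    subst c1 c2. clear HDs Ha2 Hb2 hc1 hc2 hc3.
    intros U HC Hs x Hx.
    set (E := fun t => exp (b * ln (1 - t) + a * ln (1 + t))).
    set (y := fun t => (U t - ((1+a)*(1-t) + (-1-b)*(1+t))) * E t).
    set (r := fun t => / (2 * ((1 - t^2) * E t))).
    assert (HE : forall t, 0 < E t) by (intro; apply exp_pos).
    assert (Hyd : forall t, -1 < t < 1 -> is_derive y t (- (r t * y t ^ 2))).
    { intros t Ht. destruct (HC t Ht) as [Hex _]. assert (Hst := Hs t Ht).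
      unfold y, E, r. auto_derive.
      - repeat split; try lra. exact Hex.
      - fold (E t). assert (HEt := HE t).
        change (Derive (fun u => U u) t) with (Derive U t).
        assert (Hdu : Derive U t = ((1-t^2)*Derive U t + 2*t*U t + /2*U t^2 - 2*t*U t - /2*U t^2)/(1-t^2))
          by (field; nra).
        rewrite Hst in Hdu. rewrite Hdu. unfold E in *. replace (1 + - t) with (1 - t) by ring.
        set (e := exp (b * ln (1 - t) + a * ln (1 + t))) in *. clearbody e.
        field. repeat split; nra. }
    set (M := exp ((a + b) * ln 2)).
    assert (HM : 0 < M) by apply exp_pos.
    assert (Hrp : forall t, -1 < t < 1 -> 0 <= r t).
    { intros t Ht. unfold r. left. apply Rinv_0_lt_compat.
      assert (0 < 1 - t^2) by nra. assert (HEt := HE t). nra. }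
    assert (Hln2 : 0 < ln 2) by (rewrite <- ln_1; apply ln_increasing; lra).
    assert (HC4 : 0 < / (4 * M)) by (apply Rinv_0_lt_compat; lra).
    assert (Hy1 : y x <= 0).
    { apply (key y r (/ (4 * M)) HC4 Hyd Hrp); auto.
      intros t Ht. unfold r.
      replace (/ (4 * M) / (1 + t)) with (/ (4 * M * (1 + t))) by (field; lra).
      apply Rinv_le_contravar.
      - assert (HEt := HE t). assert (0 < 1 - t^2) by nra. nra.
      - assert (E t <= M).
        { unfold E, M. apply exp_mono_le.
          assert (ln (1 + t) <= 0) by (rewrite <- ln_1; apply ln_le; lra).
          assert (ln (1 - t) <= ln 2) by (apply ln_le; lra).
          nra. }
        assert (HEt := HE t).
        assert (1 - t^2 <= 2*(1+t)) by nra.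
        assert ((1 - t^2) * E t <= (2*(1+t)) * M)
          by (apply Rmult_le_compat; nra).
        lra. }
    assert (Hy2 : 0 <= y x).
    { apply (key2 y r (/ (4 * M)) HC4 Hyd Hrp); auto.
      intros t Ht. unfold r.
      replace (/ (4 * M) / (1 - t)) with (/ (4 * M * (1 - t))) by (field; lra).
      apply Rinv_le_contravar.
      - assert (HEt := HE t). assert (0 < 1 - t^2) by nra. nra.
      - assert (E t <= M).
        { unfold E, M. apply exp_mono_le.
          assert (ln (1 - t) <= 0) by (rewrite <- ln_1; apply ln_le; lra).
          assert (ln (1 + t) <= ln 2) by (apply ln_le; lra).
          nra. }
        assert (HEt := HE t).
        assert (1 - t^2 <= 2*(1-t)) by nra.
        assert ((1 - t^2) * E t <= (2*(1-t)) * M)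
          by (apply Rmult_le_compat; nra).
        lra. }
    assert (Hy0 : y x = 0) by lra.
    unfold y in Hy0. destruct (Rmult_integral _ _ Hy0) as [H0|H0].
    + lra.
    + pose proof (HE x); lra.
  - split; ring.
Qed.
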